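(* Let $\lambda_0\in(0,1/2)$ and let $\nu$ be uniformly distributed on $[0,\pi]$, $n_1=\cos\nu$, $n_2=\sin\nu$. Then $$E\left[|n_1|\,n_2^2\arctan\left(\frac{4\lambda_0|n_1|}{4\lambda_0^2-1}\right)\right]=-\frac{\lambda_0}2-\frac23\lambda_0^3.$$
   Context: $\arctan$ denotes the principal branch with values in $(-\pi/2,\pi/2)$. *)

(* Defs.v *)
From Stdlib Require Import Reals.
From Coquelicot Require Import Coquelicot.
Open Scope R_scope.

Definition uniform_expect (a b : R) (f : R -> R) : R :=
  / (b - a) * RInt f a b.

(* Main.v *)
Require Import Defs.
From Stdlib Require Import Reals Lra Psatz.
From Coquelicot Require Import Coquelicot.
Open Scope R_scope.

Definition G (s x : R) := x - atan ((s-1) * sin x * cos x / (s * cos x ^ 2 + sin x ^ 2)).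

Lemma dG s x : 0 < s -> is_derive (G s) x (s / (1 + (s^2-1) * cos x ^ 2)).
Proof.
  intros hs. unfold G.
  assert (hsc := sin2_cos2 x). unfold Rsqr in hsc.
  assert (hd : 0 < s * cos x ^ 2 + sin x ^ 2).
  { destruct (Req_dec (cos x) 0) as [e|e].
    - rewrite e. nra.
    - assert (0 < cos x ^2) by (apply pow2_gt_0 ; auto). nra. }
  auto_derive.
  - lra.
  - set (S := sin x) in *. set (C := cos x) in *.
    assert (h2 : 0 < 1 + (s^2-1)*C^2) by nra.
    assert (e : S^2 = 1 - C^2) by nra.
    field_simplify; try lra.
    + replace (S^4) with ((S^2)^2) by ring. rewrite e. field. nra.
    + split. nra. nra.
Qed.
Definition H0 (k x : R) := sin x ^ 3 / 3 * atan (k * cos x)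
  + k / 3 * ((x / 2 + sin x * cos x / 2) / k^2 - (2 * k^2 + 1) * x / (k^2)^2).

Lemma dH0 k x : k <> 0 -> is_derive (H0 k) x
  (cos x * sin x ^ 2 * atan (k * cos x) - k / 3 * sin x ^ 4 / (1 + k^2 * cos x ^ 2)
   + k/3 * (cos x ^ 2 / k^2 - (2*k^2+1)/(k^2)^2)).
Proof.
  intros hk. unfold H0. auto_derive; auto.
  assert (hsc := sin2_cos2 x). unfold Rsqr in hsc.
  set (S := sin x) in *. set (C := cos x) in *.
  assert (e : S^2 = 1 - C^2) by nra.
  assert (0 <= C^2) by nra.
  field_simplify; try (split; nra); try nra.
  replace (S^4) with ((S^2)^2) by ring. rewrite e. field; repeat split; try nra; auto.
all: let h := fresh in intro h; match type of h with ?a = 0 =>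
    assert (k * a = 0) by (rewrite h; ring) end;
    assert (0 < k^2) by (apply pow2_gt_0; auto); nra.
Qed.

Definition H (k s x : R) := H0 k x + (k / 3 * s ^ 3 / (k^2)^2) * G s x.

Lemma dH k s x : k <> 0 -> 0 < s -> s^2 = 1 + k^2 ->
  is_derive (H k s) x (cos x * sin x ^ 2 * atan (k * cos x)).
Proof.
  intros hk hs hs2. unfold H.
  assert (D := is_derive_plus _ _ x _ _ (dH0 k x hk)
     (is_derive_scal (G s) x (k/3*s^3/(k^2)^2) _ (dG s x hs))).
  unfold plus in D; cbn -[pow] in D.
  match type of D with is_derive _ _ ?d =>
    replace (cos x * sin x ^ 2 * atan (k * cos x)) with d; [exact D|] end.
  rewrite hs2.
  assert (hsc := sin2_cos2 x). unfold Rsqr in hsc.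
  set (S := sin x) in *. set (C := cos x) in *.
  assert (e : S^2 = 1 - C^2) by nra.
  assert (0 <= C^2) by nra.
  assert (0 < k^2) by (apply pow2_gt_0; auto).
  replace (S^4) with ((S^2)^2) by ring. rewrite e.
  replace (s^3) with (s * s^2) by ring. rewrite hs2.
  replace (k / 3 * (s * (1 + k ^ 2)) / (k ^ 2) ^ 2 * (s / (1 + (1 + k ^ 2 - 1) * C ^ 2)))
    with (k / 3 * (s^2 * (1 + k ^ 2)) / (k ^ 2) ^ 2 / (1 + (1 + k ^ 2 - 1) * C ^ 2))
    by (field; split; [nra|auto]).
  rewrite hs2. field. split; [auto|nra].
Qed.

Theorem lemma9 (lambda0 : R) (h0 : 0 < lambda0) (h1 : lambda0 < 1/2) :
  uniform_expect 0 PI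
    (fun nu => Rabs (cos nu) * (sin nu) ^ 2 *
       atan (4 * lambda0 * Rabs (cos nu) / (4 * lambda0 ^ 2 - 1)))
  = - lambda0 / 2 - 2 / 3 * lambda0 ^ 3.
Proof.
  set (l := lambda0) in *.
  assert (hc : 4 * l ^ 2 - 1 < 0) by nra.
  set (k := 4 * l / (4 * l ^ 2 - 1)).
  set (s := (4 * l ^ 2 + 1) / (1 - 4 * l ^ 2)).
  assert (hk : k <> 0).
  { unfold k. unfold Rdiv. apply Rmult_integral_contrapositive_currified. lra.
    apply Rinv_neq_0_compat. lra. }
  assert (hs : 0 < s). { unfold s. apply Rdiv_lt_0_compat; nra. }
  assert (hs2 : s ^ 2 = 1 + k ^ 2). { unfold s, k. field. lra. }
  unfold uniform_expect.
  rewrite (RInt_ext _ (fun x => cos x * sin x ^ 2 * atan (k * cos x))).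
  2:{ intros x _. destruct (Rle_dec 0 (cos x)).
      - rewrite Rabs_right by lra.
        replace (4 * l * cos x / (4 * l ^ 2 - 1)) with (k * cos x)
          by (unfold k; field; lra). reflexivity.
      - rewrite Rabs_left by lra.
        replace (4 * l * - cos x / (4 * l ^ 2 - 1)) with (- (k * cos x))
          by (unfold k; field; lra).
        rewrite atan_opp. change (Rmult (- cos x * sin x ^ 2) (- atan (k * cos x)) = Rmult (cos x * sin x ^ 2) (atan (k * cos x))). ring. }
  assert (A : forall x, Rmin 0 PI <= x <= Rmax 0 PI ->
     is_derive (H k s) x (cos x * sin x ^ 2 * atan (k * cos x))).
  { intros x _. apply dH; auto. }
  assert (B : forall x, Rmin 0 PI <= x <= Rmax 0 PI ->
     continuous (fun x => cos x * sin x ^ 2 * atan (k * cos x)) x).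
  { intros x _. apply (@ex_derive_continuous R_AbsRing R_NormedModule). auto_derive. auto. }
  pose proof (is_RInt_derive _ _ 0 PI A B) as I.
  rewrite (is_RInt_unique _ _ _ _ I).
  unfold minus, plus, opp; simpl.
  unfold H, H0, G. rewrite sin_PI, cos_PI, sin_0, cos_0.
  replace ((s - 1) * 0 * -1 / (s * (-1) ^ 2 + 0 ^ 2)) with 0 by (field; lra).
  replace ((s - 1) * 0 * 1 / (s * 1 ^ 2 + 0 ^ 2)) with 0 by (field; lra).
  rewrite atan_0.
  replace (s^3) with (s * s^2) by ring. rewrite hs2.
  assert (hpi := PI_RGT_0).
  assert (0 < k^2) by (apply pow2_gt_0; auto).
  replace s with ((4 * l ^ 2 + 1) / (1 - 4 * l ^ 2)) by reflexivity.
  unfold k. field. repeat split; try lra.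
Qed.
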